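(* Let $A$ be a cyclic Leibniz algebra generated by $a$. Then $A$ has a unique Cartan subalgebra, namely the Fitting null component $A_0=\{b\in A: L_a^m(b)=0 \text{ for some } m\ge1\}$ of $L_a$ acting on $A$.
   Context: A (left) Leibniz algebra is an algebra satisfying $x(yz)=(xy)z+y(xz)$ for all $x,y,z$; all algebras are finite-dimensional over a field. $A$ is cyclic generated by $a$ if $A$ is generated as an algebra by the single element $a$. $L_a:A\to A$ is left multiplication $b\mapsto ab$. The normalizer of a subalgebra $C$ is $N_A(C)=\{x\in A: xC\subseteq C,\ Cx\subseteq C\}$. A Cartan subalgebra is a nilpotent subalgebra $C$ with $N_A(C)=C$, where nilpotent means $C^t=0$ for some $t$ ($C^1=C$, $C^{j+1}=CC^j$). *)

(* Defs.v *)
From HB Require Import structures.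
From mathcomp Require Import all_boot all_order all_algebra.
Set Implicit Arguments. Unset Strict Implicit. Unset Printing Implicit Defensive.
Import GRing.Theory.
Local Open Scope ring_scope.

(* A finite-dimensional (non-associative) algebra over a field F is modelled
   as a vector space A : vectType F together with a multiplication
   mul : A -> A -> A that is bilinear. *)
Definition bilinear_mul (F : fieldType) (A : vectType F) (mul : A -> A -> A) :=
  (forall x, linear (mul x)) /\ (forall y, linear (fun x => mul x y)).

Definition left_leibniz (F : fieldType) (A : vectType F) (mul : A -> A -> A) :=
  forall x y z, mul x (mul y z) = mul (mul x y) z + mul y (mul x z).

Definition is_subalgebra (F : fieldType) (A : vectType F) (mul : A -> A -> A)
  (C : {vspace A}) := forall x y, x \in C -> y \in C -> mul x y \in C.

Definition generated_by (F : fieldType) (A : vectType F) (mul : A -> A -> A)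
  (a : A) := forall S : {vspace A}, is_subalgebra mul S -> a \in S -> S = fullv.

(* product UV of subspaces: the subspace spanned by all products uv
   (by bilinearity, spanned by products of basis vectors) *)
Definition prodsp (F : fieldType) (A : vectType F) (mul : A -> A -> A)
  (U V : {vspace A}) : {vspace A} :=
  <<[seq mul u v | u <- vbasis U, v <- vbasis V]>>%VS.

(* cpow C t = C^t, with C^1 = C, C^(j+1) = C C^j  (C^0 := C, unused) *)
Fixpoint cpow (F : fieldType) (A : vectType F) (mul : A -> A -> A)
  (C : {vspace A}) (t : nat) : {vspace A} :=
  match t with
  | 0 => C
  | t'.+1 => if t' is 0 then C else prodsp mul C (cpow mul C t')
  end.

Definition nilpotent_sub (F : fieldType) (A : vectType F) (mul : A -> A -> A)
  (C : {vspace A}) := exists t, (0 < t)%N /\ cpow mul C t = 0%VS.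

Definition in_normalizer (F : fieldType) (A : vectType F) (mul : A -> A -> A)
  (C : {vspace A}) (x : A) :=
  forall c, c \in C -> mul x c \in C /\ mul c x \in C.

Definition is_cartan (F : fieldType) (A : vectType F) (mul : A -> A -> A)
  (C : {vspace A}) :=
  [/\ is_subalgebra mul C, nilpotent_sub mul C &
      forall x, in_normalizer mul C x <-> x \in C].

Definition fitting0 (F : fieldType) (A : vectType F) (mul : A -> A -> A)
  (a b : A) := exists m, (1 <= m)%N /\ iter m (mul a) b = 0.

(* Main.v *)
Require Import Defs.
From HB Require Import structures.
From mathcomp Require Import all_boot all_order all_algebra.
From Stdlib Require Import Classical.
Set Implicit Arguments. Unset Strict Implicit. Unset Printing Implicit Defensive.
Import GRing.Theory.
Local Open Scope ring_scope.

Definition mkHom (F : fieldType) (U V : vectType F) (f : U -> V) (hf : linear f) : 'Hom(U,V) :=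
  linfun (HB.pack_for {linear U -> V} f (GRing.isLinear.Build F U V *:%R f hf)).
Lemma mkHomE (F : fieldType) (U V : vectType F) (f : U -> V) (hf : linear f) x :
  mkHom hf x = f x.
Proof. by rewrite /mkHom lfunE. Qed.

Section Gen.
Variables (F : fieldType) (U V : vectType F) (f : U -> V) (hf : linear f).
Lemma linD u v : f (u + v) = f u + f v.
Proof. by rewrite -!(mkHomE hf) linearD. Qed.
Lemma linB u v : f (u - v) = f u - f v.
Proof. by rewrite -!(mkHomE hf) linearB. Qed.
Lemma linZ k u : f (k *: u) = k *: f u.
Proof. by rewrite -!(mkHomE hf) linearZ. Qed.
Lemma lin0 : f 0 = 0.
Proof. by rewrite -!(mkHomE hf) linear0. Qed.
Lemma linsum m (G : 'I_m -> U) : f (\sum_(i < m) G i) = \sum_(i < m) f (G i).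
Proof. rewrite -(mkHomE hf) linear_sum; apply: eq_bigr => i _; exact: mkHomE. Qed.
End Gen.

Section Main.
Variables (F : fieldType) (A : vectType F) (mul : A -> A -> A).
Hypothesis hbil : bilinear_mul mul.
Hypothesis hleib : left_leibniz mul.
Variable a : A.
Hypothesis hgen : generated_by mul a.

Lemma mulrD x u v : mul x (u + v) = mul x u + mul x v.
Proof. exact: (linD (hbil.1 x)). Qed.
Lemma mulDl y u v : mul (u + v) y = mul u y + mul v y.
Proof. exact: (linD (hbil.2 y)). Qed.
Lemma mulBl y u v : mul (u - v) y = mul u y - mul v y.
Proof. exact: (linB (hbil.2 y)). Qed.
Lemma mulrZ x k u : mul x (k *: u) = k *: mul x u.
Proof. exact: (linZ (hbil.1 x)). Qed.
Lemma mulZl y k u : mul (k *: u) y = k *: mul u y.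
Proof. exact: (linZ (hbil.2 y)). Qed.
Lemma mulr0 x : mul x 0 = 0.
Proof. exact: (lin0 (hbil.1 x)). Qed.

Definition Lann y := forall w, mul y w = 0.

Lemma sq_ann x : Lann (mul x x).
Proof.
move=> z; have h := hleib x x z; rewrite addrC in h.
apply: (@addrI _ (mul x (mul x z))); by rewrite addr0 -h.
Qed.

Lemma ann_a y : Lann y -> Lann (mul a y).
Proof.
move=> hy w; have h := hleib a y w; rewrite hy mulr0 hy addr0 in h.
by rewrite -h.
Qed.

Lemma Lmap_lin : linear (fun y => mkHom (hbil.1 y)).
Proof.
move=> k u v; apply/lfunP => w.
by rewrite add_lfunE scale_lfunE !mkHomE; exact: (hbil.2 w).
Qed.

Definition Nsp := lker (mkHom Lmap_lin).

Lemma memNsp y : y \in Nsp <-> Lann y.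
Proof.
rewrite /Nsp memv_ker mkHomE; split.
  move/eqP => h w; have := congr1 (fun g : 'End(A) => g w) h.
  by rewrite mkHomE zero_lfunE.
by move=> h; apply/eqP/lfunP => w; rewrite mkHomE zero_lfunE.
Qed.

Lemma decomp x : exists k n, Lann n /\ x = k *: a + n.
Proof.
pose S := (<[a]> + Nsp)%VS.
have hS : is_subalgebra mul S.
  move=> x1 y1 /memv_addP [u hu [v hv ->]] /memv_addP [u' hu' [v' hv' ->]].
  case/vlineP: hu => k ->; case/vlineP: hu' => k' ->.
  have hv1 := (proj1 (memNsp v) hv); have hv2 := (proj1 (memNsp v') hv').
  rewrite mulDl hv1 addr0 mulZl mulrD mulrZ.
  apply: (subvP (addvSr _ _)); apply: memvZ; apply: rpredD.
    by apply: memvZ; apply/memNsp; exact: sq_ann.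
  by apply/memNsp; exact: ann_a.
have aS : a \in S by apply: (subvP (addvSl _ _)); exact: memv_line.
have := memvf x; rewrite -(hgen hS aS) => /memv_addP [u hu [v hv ->]].
case/vlineP: hu => k ->; exists k, v; split => //; exact/memNsp.
Qed.

Lemma annD y : Lann (mul a y).
Proof.
have [k [n [hn ->]]] := decomp y.
move=> w; rewrite mulrD mulrZ mulDl mulZl (sq_ann a) (ann_a hn) scaler0 addr0 //.
Qed.

Lemma mulE x : exists k, forall y, mul x y = k *: mul a y.
Proof.
have [k [n [hn ->]]] := decomp x.
by exists k => y; rewrite mulDl mulZl hn addr0.
Qed.

Lemma iter_lin i : linear (iter i (mul a)).
Proof.
elim: i => [|i IH] k u v //=.
by rewrite IH; exact: (hbil.1 a).
Qed.

Lemma iter0 k : iter k (mul a) 0 = 0.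
Proof. by elim: k => [|k IH] //=; rewrite IH mulr0. Qed.

Definition Dp i := mkHom (iter_lin i).
Definition K i := lker (Dp i).

Lemma memK i x : (x \in K i) = (iter i (mul a) x == 0).
Proof. by rewrite /K memv_ker /Dp mkHomE. Qed.

Lemma K_sub j : (K j <= K j.+1)%VS.
Proof. by apply/subvP => x; rewrite !memK iterS => /eqP ->; rewrite mulr0. Qed.

Lemma chain i : (i <= \dim (K i))%N \/ exists2 j, (j < i)%N & K j = K j.+1.
Proof.
elim: i => [|i [IH|[j hj e]]]; first by left.
- case: (eqVneq (K i) (K i.+1)) => e; first by right; exists i.
  left; apply: (leq_ltn_trans IH).
  by rewrite (ltn_leqif (dimv_leqif_eq (K_sub i))) e.
- by right; exists j => //; exact: ltnW.
Qed.

Definition N := (\dim {:A}).+1.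
Definition C0 := K N.

Definition Stab j := forall x, iter j.+1 (mul a) x = 0 -> iter j (mul a) x = 0.

Lemma Sprop j k : Stab j -> Stab (j + k).
Proof.
move=> Sj x; rewrite -addSn !iterD => h.
by have := Sj _ h.
Qed.

Lemma stabN : Stab N.
Proof.
have [h|[j hj e]] := chain N.
  have := leq_trans h (dimvS (subvf (K N))).
  by rewrite /N ltnn.
have Sj : Stab j.
  move=> x hx; apply/eqP; rewrite -memK e memK; exact/eqP.
have -> : N = (j + (N - j))%N by rewrite subnKC // ltnW.
exact: Sprop.
Qed.

Lemma stab_gen k x : iter (N + k) (mul a) x = 0 -> iter N (mul a) x = 0.
Proof.
elim: k x => [|k IH] x; first by rewrite addn0.
rewrite addnS => h; apply: IH; exact: (@Sprop N k stabN x h).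
Qed.

Lemma zero_C0 j y : iter j (mul a) y = 0 -> y \in C0.
Proof.
move=> h; rewrite /C0 memK; apply/eqP; apply: (@stab_gen j).
by rewrite iterD h iter0.
Qed.

Lemma C0_D y : y \in C0 -> mul a y \in C0.
Proof.
by rewrite /C0 !memK -iterSr iterS => /eqP ->; rewrite mulr0.
Qed.

Lemma a0_spec : exists2 a0, a0 \in C0 & forall y, mul a0 y = mul a y.
Proof.
have cap0 : (C0 :&: limg (Dp N))%VS = 0%VS.
  apply/eqP; rewrite -subv0; apply/subvP => x; rewrite memv_cap memv0.
  case/andP => hx /memv_imgP [z _ hz]; move: hx; rewrite hz /C0 memK /Dp mkHomE.
  rewrite -iterD => /eqP h; have := stab_gen h.
  by move=> ->.
have sumf : (C0 + limg (Dp N))%VS = fullv.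
  apply/eqP; rewrite eqEdim subvf /=.
  have h1 := dimv_sum_cap C0 (limg (Dp N)).
  have h2 := limg_ker_dim (Dp N) fullv.
  rewrite cap0 dimv0 addn0 in h1; rewrite capfv in h2.
  by rewrite h1 -h2 addnC.
have := memvf a; rewrite -sumf => /memv_addP [a0 ha0 [a1 /memv_imgP [z _ hz] ea]].
exists a0 => // y.
have -> : a0 = a - a1 by rewrite ea addrK.
rewrite mulBl hz /Dp mkHomE /N iterS (annD _ y) subr0 //.
Qed.

Lemma cpowS (C : {vspace A}) j : cpow mul C j.+2 = prodsp mul C (cpow mul C j.+1).
Proof. by []. Qed.

Lemma prodsp_sub (U V W : {vspace A}) :
  (forall u v, u \in U -> v \in V -> mul u v \in W) -> (prodsp mul U V <= W)%VS.
Proof.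
move=> H; apply/span_subvP => x /allpairsP [[u v] [/= hu hv ->]].
by apply: H; exact: vbasis_mem.
Qed.

Lemma prodsp_mem (U V : {vspace A}) u v : u \in U -> v \in V -> mul u v \in prodsp mul U V.
Proof.
move=> hu hv; rewrite (coord_vbasis hu) (coord_vbasis hv).
rewrite (linsum (hbil.2 _)); apply: rpred_sum => i _.
rewrite mulZl; apply: memvZ; rewrite (linsum (hbil.1 _)); apply: rpred_sum => j _.
rewrite mulrZ; apply: memvZ; apply: memv_span; apply/allpairsP.
exists ((vbasis U)`_i, (vbasis V)`_j); split => //; apply: mem_nth; by rewrite size_tuple.
Qed.

Lemma cpow_sub j : (cpow mul C0 j.+1 <= Dp j @: C0)%VS.
Proof.
elim: j => [|j IH].
  apply/subvP => v hv; have -> : v = Dp 0 v by rewrite /Dp mkHomE.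
  exact: memv_img.
rewrite cpowS; apply: prodsp_sub => u v hu /(subvP IH)/memv_imgP [c hc ->].
have [l ->] := mulE u.
have -> : l *: mul a (Dp j c) = Dp j.+1 (l *: c).
  by rewrite /Dp !mkHomE (linZ (iter_lin j.+1)).
apply: memv_img; exact: memvZ.
Qed.

Lemma C0_cartan : is_cartan mul C0.
Proof.
have hsub : is_subalgebra mul C0.
  move=> x y _ hy; have [l ->] := mulE x; apply: memvZ; exact: C0_D.
split => //.
  exists N.+1; split => //; apply/eqP; rewrite -subv0.
  apply: subv_trans (cpow_sub N) _; rewrite subv0 -lkerE; exact: subvv.
move=> x; split.
  move=> h; have [a0 ha0 ha0y] := a0_spec.
  have := (h a0 ha0).2; rewrite ha0y /C0 !memK => /eqP hD.
  apply/eqP; apply: stabN; by rewrite iterSr.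
by move=> hx c hc; split; apply: hsub.
Qed.

Lemma fit_C0 b : b \in C0 <-> fitting0 mul a b.
Proof.
split.
  by rewrite /C0 memK => /eqP h; exists N.
by case=> m [_ h]; exact: zero_C0 h.
Qed.

Lemma uniq_cartan C : is_cartan mul C -> C = C0.
Proof.
case=> hsub [t [ht hcp]] hnorm.
have Nmem : forall x, (forall c, c \in C -> mul x c \in C /\ mul c x \in C) -> x \in C.
  by move=> x h; apply/hnorm.
case: (classic (exists c, c \in C /\ exists k, k != 0 /\ forall y, mul c y = k *: mul a y))
  => [[c [hc [k [hk hcy]]]] | hP].
- have DC : forall y, y \in C -> mul a y \in C.
    move=> y hy; have := hsub c y hc hy; rewrite hcy => h.
    by rewrite -(scalerK hk (mul a y)); apply: memvZ.
  have powc : forall j y, y \in C -> iter j (mul c) y \in cpow mul C j.+1.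
    elim=> [|j IH] y hy; first exact: hy.
    rewrite cpowS iterS; apply: prodsp_mem => //; exact: IH.
  have iterc : forall j y, iter j (mul c) y = k ^+ j *: iter j (mul a) y.
    elim=> [|j IH] y; first by rewrite scale1r.
    by rewrite !iterS IH hcy mulrZ scalerA exprS.
  have CsubC0 : (C <= C0)%VS.
    apply/subvP => y hy; have := powc t.-1 y hy.
    rewrite prednK // hcp memv0 iterc scaler_eq0 expf_eq0 (negbTE hk) andbF /=.
    by move/eqP; exact: zero_C0.
  have C0subC : forall j x, x \in C0 -> iter j (mul a) x \in C -> x \in C.
    elim=> [|j IH] x hx //; rewrite iterSr => h.
    have hDx : mul a x \in C := IH _ (C0_D hx) h.
    apply: Nmem => c' hc'; split.
      have [l ->] := mulE x; apply: memvZ; exact: DC.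
    have [l ->] := mulE c'; exact: memvZ.
  apply/eqP; rewrite eqEsubv CsubC0 /=; apply/subvP => x hx.
  apply: (C0subC N) => //; move: hx; rewrite /C0 memK => /eqP ->; exact: mem0v.
- have annC : forall c, c \in C -> Lann c.
    move=> c hc w; have [l hl] := mulE c.
    case: (eqVneq l 0) => [l0|lnz]; first by rewrite hl l0 scale0r.
    by exfalso; apply: hP; exists c; split => //; exists l; split.
  have NC : forall n, Lann n -> n \in C.
    move=> n hn; apply: Nmem => c hc; by rewrite hn (annC c hc n) mem0v.
  have aC : a \in C.
    apply: Nmem => c hc; rewrite (annC c hc a); split; [apply: NC; exact: annD | exact: mem0v].
  have a0 : forall y, mul a y = 0 := annC a aC.
  have CF : C = fullv.
    apply/eqP; rewrite eqEsubv subvf /=; apply/subvP => x _.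
    have [k [n [hn ->]]] := decomp x; apply: rpredD; [apply: memvZ; exact: aC | exact: NC].
  have C0F : C0 = fullv.
    apply/eqP; rewrite eqEsubv subvf /=; apply/subvP => x _.
    by rewrite /C0 memK /N iterS a0.
  by rewrite CF C0F.
Qed.

End Main.

Theorem mainTheorem11 (F : fieldType) (A : vectType F) (mul : A -> A -> A)
  (hbil : bilinear_mul mul) (hleib : left_leibniz mul)
  (a : A) (hgen : generated_by mul a) :
  exists C0 : {vspace A},
    (forall b, b \in C0 <-> fitting0 mul a b) /\
    is_cartan mul C0 /\
    (forall C : {vspace A}, is_cartan mul C -> C = C0).
Proof.
exists (C0 hbil a); split; first exact: fit_C0.
split; first exact: C0_cartan.
exact: uniq_cartan.
Qed.
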